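(* Let $(\mathbb S,+,\cdot)$ be an S-Ring. Then $\Lambda=\mathbb S_0$, and consequently $(\mathbb S,+,\cdot)$ is Complete Regular.
   Context: An S-Structure is a triple $(\mathbb S,+,\cdot)$ where $\mathbb S$ is a set and $+,\cdot$ are binary operations on $\mathbb S$ such that: $(\mathbb S,+)$ is a commutative group with identity $0$ (the inverse of $s$ is written $-s$, and $s-t:=s+(-t)$); $\mathbb S$ is closed under $\cdot$; and there exists $s\in\mathbb S$ with $0\cdot s\neq 0$ or $s\cdot 0\neq 0$. Multiplication binds tighter than addition. The structures considered come with a distinguished element of $\mathbb S$ denoted $1$. It is Commutative if $s\cdot t=t\cdot s$ for all $s,t$. For a Commutative S-Structure and $\alpha\in\mathbb S$, put $\mathbb S_\alpha=\{s\in\mathbb S:0\cdot s=s\cdot 0=\alpha\}$ and $\Lambda=\{\alpha\in\mathbb S:\mathbb S_\alpha\neq\emptyset\}$. Wheel Distributive: $s\cdot(t+r)+(s\cdot 0)=(s\cdot t)+(s\cdot r)$ for all $s,t,r\in\mathbb S$. S-Associative: for all $m,n\in\mathbb S_0$ and $s\in\mathbb S$, $m\cdot(n\cdot s)=(m\cdot n)\cdot s-([(m-1)\cdot(n-1)]\cdot(0\cdot s))$. Base: if $\mathbb S_0\neq\emptyset$ and $\alpha\in\Lambda$, $q\in\mathbb S_\alpha$ is a Base for $\mathbb S_\alpha$ if $q+\beta\in\mathbb S_\alpha$ for all $\beta\in\mathbb S_0$ and every $s\in\mathbb S_\alpha$ equals $q+\beta$ for some $\beta\in\mathbb S_0$.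 Coordinated: $\mathbb S_0\neq\emptyset$ and every $\mathbb S_\alpha$ with $\alpha\in\Lambda$ has a Base. Standard Bases: a Coordinated Commutative S-Structure has Standard Bases if there is a specified element $q_0(1)\in\mathbb S_1$ which is a Base for $\mathbb S_1$, and for every $\alpha\in\Lambda$ the element $q_0(\alpha):=\alpha\cdot(q_0(1)+1)-1$ lies in $\mathbb S_\alpha$ and is a Base for $\mathbb S_\alpha$. An Essential S-Structure is an S-Structure that is Commutative, Wheel Distributive, S-Associative, has Standard Bases (in particular is Coordinated), satisfies $0,1\in\mathbb S_0$, and satisfies $\mathbb S_0=\{1\cdot x:x\in\mathbb S_0\}$. A Unity is an element $e\in\Lambda$ with $e\cdot s=s\cdot e=s$ for all $s\in\mathbb S$. An S-Ring is an Essential S-Structure which has a Unity. A Commutative S-Structure is Regular if $0\cdot s\in\mathbb S_0$ for every $s\in\mathbb S$, and Complete Regular if it is Regular and for every $\alpha\in\mathbb S_0$ there exists $s\in\mathbb S$ with $0\cdot s=\alpha$. *)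

(* Defs.v *)
(* The additive commutative group (S,+) is a zmodType;
   the multiplication "·" is an arbitrary extra binary operation [mul]
   (NOT the ring multiplication), and [one] is the distinguished element 1. *)
From HB Require Import structures.
From mathcomp Require Import all_boot all_algebra.
Set Implicit Arguments. Unset Strict Implicit. Unset Printing Implicit Defensive.
Import GRing.Theory.
Local Open Scope ring_scope.

Section SStructures.
Variables (G : zmodType) (mul : G -> G -> G) (one : G).

(* S-Structure: there exists s with 0·s <> 0 or s·0 <> 0
   (the group and closure conditions are built into the types). *)
Definition is_S_structure : Prop :=
  exists s : G, mul 0 s <> 0 \/ mul s 0 <> 0.

Definition SCommutative : Prop := forall s t : G, mul s t = mul t s.

Definition S_ (alpha : G) (s : G) : Prop := mul 0 s = alpha /\ mul s 0 = alpha.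

Definition Lambda (alpha : G) : Prop := exists s, S_ alpha s.

Definition WheelDistributive : Prop :=
  forall s t r : G, mul s (t + r) + mul s 0 = mul s t + mul s r.

Definition SAssociative : Prop :=
  forall m n s : G, S_ 0 m -> S_ 0 n ->
    mul m (mul n s) = mul (mul m n) s - mul (mul (m - one) (n - one)) (mul 0 s).

Definition is_base (alpha q : G) : Prop :=
  S_ alpha q /\
  (forall beta, S_ 0 beta -> S_ alpha (q + beta)) /\
  (forall s, S_ alpha s -> exists beta, S_ 0 beta /\ s = q + beta).

Definition Coordinated : Prop :=
  (exists x, S_ 0 x) /\ (forall alpha, Lambda alpha -> exists q, is_base alpha q).

Definition q0 (q1 alpha : G) : G := mul alpha (q1 + one) - one.

Definition StandardBases : Prop :=
  Coordinated /\
  exists q1 : G, S_ one q1 /\ is_base one q1 /\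
    (forall alpha, Lambda alpha ->
       S_ alpha (q0 q1 alpha) /\ is_base alpha (q0 q1 alpha)).

Definition Essential : Prop :=
  is_S_structure /\ SCommutative /\ WheelDistributive /\ SAssociative /\
  StandardBases /\ (S_ 0 0 /\ S_ 0 one) /\
  (forall y, S_ 0 y <-> exists x, S_ 0 x /\ y = mul one x).

Definition is_unity (e : G) : Prop :=
  Lambda e /\ forall s, mul e s = s /\ mul s e = s.

Definition S_Ring : Prop := Essential /\ exists e, is_unity e.

Definition Regular : Prop := SCommutative /\ forall s, S_ 0 (mul 0 s).

Definition CompleteRegular : Prop :=
  Regular /\ forall alpha, S_ 0 alpha -> exists s, mul 0 s = alpha.

End SStructures.

(* Main.v *)
Require Import Defs.
From mathcomp Require Import all_boot all_algebra.
Local Open Scope ring_scope.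
Import GRing.Theory.

Theorem theorem3p2p1 (G : zmodType) (mul : G -> G -> G) (one : G) :
  S_Ring mul one ->
  (forall alpha : G, Lambda mul alpha <-> S_ mul 0 alpha) /\
  CompleteRegular mul.
Proof.
move=> [[_ [C [WD [SA [[_ [q1 [Sq1 [_ Hq0]]]] [[S00 S01] _]]]]]]] [e [Le Ue]].
have [He _] := Hq0 e Le.
have Hq1e : q0 mul one q1 e = q1.
  by rewrite /q0 (proj1 (Ue _)) addrK.
rewrite Hq1e in He.
have Eone : e = one by rewrite -(proj1 He) (proj1 Sq1).
subst e.
have m01 : mul 0 (- one) = 0.
  have := WD 0 one (- one).
  by rewrite subrr (proj1 S00) (proj1 S01) !add0r => <-.
have m10 : mul (-one) 0 = 0 by rewrite C m01.
have KA : forall s, mul 0 (mul 0 s) = 0.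
  move=> s; have := SA 0 one s S00 S01.
  rewrite (proj1 (Ue s)) (proj1 S01) sub0r subrr m10 => /eqP.
  by rewrite -subr_eq0 opprB addrC subrK => /eqP.
have KB : forall a, S_ mul 0 a -> mul 0 (mul a q1) = a.
  move=> a Ha.
  have h1 := SA a 0 q1 Ha S00.
  have h2 := SA 0 a q1 S00 Ha.
  rewrite (proj1 Sq1) (proj2 (Ue a)) (proj2 Ha) (proj1 Sq1) in h1.
  rewrite (proj1 Ha) (proj1 Sq1) in h2.
  by rewrite h2 (C (0 - one)) {2}h1.
have L1 : forall a, Lambda mul a <-> S_ mul 0 a.
  move=> a; split.
    move=> [s [h1 h2]]; rewrite -h1; split; first exact: KA.
    by rewrite C KA.
  move=> Ha; exists (mul a q1); split; first exact: KB.
  by rewrite C KB.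
split=> //; split; first split=> //.
  by move=> s; apply/L1; exists s; split=> //; rewrite C.
by move=> a Ha; exists (mul a q1); exact: KB.
Qed.
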